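(* Let $n,m\ge2$ with $n\mid m$ and $\gcd(m,n_0)=1$. Let $f\colon G_n\times G_m\to\{0,1\}$ satisfy $\max_{\gamma\in S,\,i,j<2}|u(\gamma,i,j)-v_f(\gamma,i,j)|<\delta$, where $v_f(\gamma,i,j)=|\{(x,y)\in G_n\times G_m: f(x,y)=i,\ f(\pi_n(\gamma)x,\pi_m(\gamma)y)=j\}|/(|G_n||G_m|)$. Then there exists $Z\subseteq G_n$ such that $|\{(x,y): f(x,y)\ne f_Z(x,y)\}|<\frac1{16}|G_n||G_m|$.
   Context: $d\ge2$; $S$ is a finite symmetric subset of $\mathrm{SL}_d(\mathbb{Z})$. $G_n:=\mathrm{SL}_d(\mathbb{Z}/n\mathbb{Z})$, $\pi_n$ is reduction mod $n$ (also $G_m\to G_n$ for $n\mid m$). For a finite group $G$ and $A,T\subseteq G$, $\partial(A,T)=\{a\in A: Ta\not\subseteq A\}$ and $h(G,T)=\min\{|\partial(A,T)|/|A|:\emptyset\neq A\subseteq G, |A|\le|G|/2\}$. Fix $n_0\in\mathbb{N}^+$ and $\epsilon>0$ such that $h(G_m,\pi_m(S))\ge\epsilon$ for all $m\ge2$ with $\gcd(m,n_0)=1$; $\delta:=\epsilon/(32|S|)$. $u(\gamma,i,j)=1/2$ if $i=j$ and $0$ otherwise ($\gamma\in S$, $i,j\in\{0,1\}$). For $Z\subseteq G_n$, $f_Z\colon G_n\times G_m\to\{0,1\}$ is $f_Z(x,y)=1$ if $\pi_n(y)^{-1}x\in Z$ and $0$ otherwise. *)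

(* Defs.v *)
From HB Require Import structures.
From mathcomp Require Import all_boot all_order all_algebra.
Set Implicit Arguments. Unset Strict Implicit. Unset Printing Implicit Defensive.
Import Order.TTheory GRing.Theory Num.Theory.
Local Open Scope ring_scope.

(* G_n = SL_d(Z/nZ), as the set of d x d matrices over 'Z_n with det 1
   (only used with n >= 2). *)
Definition SLset (d m : nat) : {set 'M['Z_m]_d} :=
  [set M : 'M['Z_m]_d | \det M == 1].

Definition redZ (d m : nat) (g : 'M[int]_d) : 'M['Z_m]_d :=
  map_mx (fun z : int => z%:~R) g.

Definition red (d n m : nat) (M : 'M['Z_m]_d) : 'M['Z_n]_d :=
  map_mx (fun a : 'Z_m => (nat_of_ord a)%:R) M.

Definition boundary (d m : nat) (A T : {set 'M['Z_m]_d}) : {set 'M['Z_m]_d} :=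
  [set a in A | [exists t in T, t *m a \notin A]].

(* h(G,T) = min { |∂(A,T)|/|A| : ∅ ≠ A ⊆ G, |A| ≤ |G|/2 }
   (value 1 if that family were empty, which never happens for G = G_m). *)
Definition cheeger (R : realFieldType) (d m : nat) (G T : {set 'M['Z_m]_d}) : R :=
  \big[Num.min/1]_(A : {set 'M['Z_m]_d} |
        [&& A \subset G, A != set0 & (#|A| * 2 <= #|G|)%N])
     ((#|boundary A T|)%:R / (#|A|)%:R).

Definition u (R : realFieldType) (i j : bool) : R := if i == j then 1 / 2 else 0.

Definition vf (R : realFieldType) (d n m : nat)
    (f : 'M['Z_n]_d -> 'M['Z_m]_d -> bool) (g : 'M[int]_d) (i j : bool) : R :=
  (#|[set p : 'M['Z_n]_d * 'M['Z_m]_d |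
        [&& p.1 \in SLset d n, p.2 \in SLset d m, f p.1 p.2 == i &
            f (redZ n g *m p.1) (redZ m g *m p.2) == j]]|)%:R
  / ((#|SLset d n| * #|SLset d m|)%N)%:R.

Definition fZ (d n m : nat) (Z : {set 'M['Z_n]_d})
    (x : 'M['Z_n]_d) (y : 'M['Z_m]_d) : bool :=
  (invmx (red n y) *m x) \in Z.

(* Main.v *)
Require Import Defs.
From HB Require Import structures.
From mathcomp Require Import all_boot all_order all_algebra.
From mathcomp Require Import zify ring lra.
Import Order.TTheory GRing.Theory Num.Theory.
Local Open Scope ring_scope.

Lemma redmod n m (hn : (1 < n)%N) (hm : (1 < m)%N) (hnm : (n %| m)%N) (k : nat) :
  ((k %% m)%N%:R : 'Z_n) = k%:R.
Proof. by rewrite -(Zp_nat_mod hn) modn_dvdm // Zp_nat_mod. Qed.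

Lemma red_rmorph n m (hn : (1 < n)%N) (hm : (1 < m)%N) (hnm : (n %| m)%N) :
  exists phi : {rmorphism 'Z_m -> 'Z_n}, forall a, phi a = (a : nat)%:R.
Proof.
pose f := fun a : 'Z_m => ((a : nat)%:R : 'Z_n).
have vm : forall k, ((k%:R : 'Z_m) : nat) = (k %% m)%N by move=> k; rewrite val_Zp_nat.
have fn : forall k, f k%:R = k%:R by move=> k; rewrite /f vm redmod.
have hf0 : nmod_morphism f.
  split; first by rewrite -[0 : 'Z_m]/(0%:R) fn.
  move=> x y; rewrite -[x]natr_Zp -[y]natr_Zp -natrD !fn natrD //.
have hf1 : monoid_morphism f.
  split; first by rewrite -[1 : 'Z_m]/(1%:R) fn.
  move=> x y; rewrite -[x]natr_Zp -[y]natr_Zp -natrM !fn natrM //.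
pose aM := GRing.isNmodMorphism.Build _ _ f hf0.
pose mM := GRing.isMonoidMorphism.Build _ _ f hf1.
pose phi : {rmorphism _ -> _} := HB.pack f aM mM.
by exists phi.
Qed.

Lemma card_sum (T : finType) (X : {set T}) : #|X| = (\sum_x ((x \in X) : nat))%N.
Proof. by rewrite -sum1_card big_mkcond /=; apply: eq_bigr => x _; case: (x \in X). Qed.

Lemma count_swap (T1 T2 : finType) (A : {set T1}) (B : {set T2})
  (h : T2 -> T1 -> T1) (P : T1 -> T2 -> bool) :
  (forall y, y \in B -> injective (h y)) ->
  (forall y z, y \in B -> (h y z \in A) = (z \in A)) ->
  #|[set p : T1 * T2 | [&& p.1 \in A, p.2 \in B & P p.1 p.2]]| =
  (\sum_(z in A) #|[set y | (y \in B) && P (h y z) y]|)%N.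
Proof.
move=> hinj hA.
transitivity (\sum_x \sum_y (([&& x \in A, y \in B & P x y]) : nat))%N.
  by rewrite card_sum pair_bigA; apply: eq_bigr => -[x y] _; rewrite inE.
transitivity (\sum_z \sum_y (([&& z \in A, y \in B & P (h y z) y]) : nat))%N; last first.
  rewrite [RHS]big_mkcond /=; apply: eq_bigr => z _; rewrite card_sum.
  case: (z \in A) => /=; last by rewrite big1.
  by apply: eq_bigr => y _; rewrite inE.
rewrite exchange_big [RHS]exchange_big /=.
apply: eq_bigr => y _.
case yB: (y \in B).
  rewrite (reindex_inj (hinj y yB)) /=.
  by apply: eq_bigr => z _; rewrite hA.
by rewrite !big1 // => x _; rewrite andbF.
Qed.

Lemma bnd_le (d m : nat) (S : seq 'M[int]_d) (X : {set 'M['Z_m]_d}) :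
 (#|boundary X [set:: map (@redZ d m) S]| <=
  \sum_(g <- undup S) #|[set y in X | redZ m g *m y \notin X]|)%N.
Proof.
rewrite card_sum.
under [X in (_ <= X)%N]eq_bigr => g _ do rewrite card_sum.
rewrite exchange_big /=; apply: leq_sum => y _.
case: (boolP (y \in boundary _ _)) => //.
rewrite inE => /andP[yX /existsP[t /andP[]]].
rewrite inE => /mapP[g gS ->] ngX.
have gU : g \in undup S by rewrite mem_undup.
by rewrite (bigD1_seq g) ?undup_uniq //= inE yX ngX.
Qed.

Lemma cheeg (R : realFieldType) d m (G T X : {set 'M['Z_m]_d}) (eps : R) :
  eps <= cheeger R G T -> X \subset G -> (#|X| * 2 <= #|G|)%N ->
  eps * (#|X|)%:R <= (#|boundary X T|)%:R.
Proof.
move=> he XG X2.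
case: (eqVneq X set0) => [->|X0]; first by rewrite cards0 mulr0.
have hX : (0 < #|X|)%N by rewrite card_gt0.
have : cheeger R G T <= (#|boundary X T|)%:R / (#|X|)%:R.
  by rewrite /cheeger (bigD1 X) /= ?ge_min ?lexx // XG X0 X2.
move=> h; have := le_trans he h.
by rewrite ler_pdivlMr ?ltr0n.
Qed.

Lemma card_split (T : finType) (G : {set T}) (Q : pred T) :
  (#|[set y | (y \in G) && Q y]| + #|[set y | (y \in G) && ~~ Q y]|)%N = #|G|.
Proof.
rewrite -(cardsID [set y | Q y] G); congr (_ + _); apply: eq_card => y; rewrite !inE //.
by rewrite andbC.
Qed.

Lemma sum_le_const (R : numDomainType) (I : eqType) (r : seq I) (F : I -> R) (c : R) :
  (forall i, i \in r -> F i <= c) -> \sum_(i <- r) F i <= (size r)%:R * c.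
Proof.
elim: r => [|a r IH] H; first by rewrite big_nil mul0r.
rewrite big_cons /= -addn1 natrD mulrDl mul1r [X in _ <= X]addrC.
apply: lerD; first by apply: H; rewrite inE eqxx.
by apply: IH => i ir; apply: H; rewrite inE ir orbT.
Qed.

Lemma sum_lt_const (R : numDomainType) (I : eqType) (r : seq I) (F : I -> R) (c : R) :
  r != [::] -> (forall i, i \in r -> F i < c) -> \sum_(i <- r) F i < (size r)%:R * c.
Proof.
case: r => // a r _ H.
rewrite big_cons /= -addn1 natrD mulrDl mul1r [X in _ < X]addrC.
apply: ltr_leD; first by apply: H; rewrite inE eqxx.
by apply: sum_le_const => i ir; apply: ltW; apply: H; rewrite inE ir orbT.
Qed.

Theorem claim1 (R : realFieldType) (d : nat) (hd : (2 <= d)%N)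
  (S : seq 'M[int]_d)
  (hSdet : forall g, g \in S -> \det g = 1)
  (hSsym : forall g, g \in S -> invmx g \in S)
  (n0 : nat) (hn0 : (0 < n0)%N) (eps : R) (heps : 0 < eps)
  (hexp : forall m : nat, (2 <= m)%N -> coprime m n0 ->
     eps <= cheeger R (SLset d m) [set:: map (@redZ d m) S])
  (n m : nat) (hn : (2 <= n)%N) (hm : (2 <= m)%N) (hnm : (n %| m)%N)
  (hcop : coprime m n0)
  (f : 'M['Z_n]_d -> 'M['Z_m]_d -> bool)
  (hf : forall g, g \in S -> forall i j : bool,
     `|u R i j - vf R f g i j| < eps / (32 * (size (undup S))%:R)) :
  exists Z : {set 'M['Z_n]_d}, Z \subset SLset d n /\
    (#|[set p : 'M['Z_n]_d * 'M['Z_m]_d |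
        [&& p.1 \in SLset d n, p.2 \in SLset d m &
            f p.1 p.2 != fZ Z p.1 p.2]]|)%:R
    < (1 / 16 : R) * ((#|SLset d n| * #|SLset d m|)%N)%:R.
Proof.
have [phi phiE] := red_rmorph n m hn hm hnm.
have redE : forall M : 'M['Z_m]_d, red n M = map_mx phi M.
  by move=> M; apply/matrixP=> i j; rewrite !mxE phiE.
have redM : forall A B : 'M['Z_m]_d, red n (A *m B) = red n A *m red n B.
  by move=> A B; rewrite !redE map_mxM.
have redZE : forall g : 'M[int]_d, red n (redZ m g) = redZ n g.
  by move=> g; rewrite redE; apply/matrixP => i j; rewrite !mxE rmorph_int.
have detZ : forall k (g : 'M[int]_d), g \in S -> \det (redZ k g : 'M['Z_k]_d) = 1.
  by move=> k g gS; rewrite /redZ det_map_mx hSdet // rmorph1.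
have detred : forall y, y \in SLset d m -> \det (red n y) = 1.
  by move=> y; rewrite inE => /eqP hy; rewrite redE det_map_mx hy rmorph1.
have unitred : forall y, y \in SLset d m -> red n y \in unitmx.
  by move=> y /detred; rewrite unitmxE => ->; exact: unitr1.
have SLg : forall g y, g \in S -> y \in SLset d m -> redZ m g *m y \in SLset d m.
  by move=> g y gS; rewrite !inE det_mulmx detZ // mul1r.
have hinj : forall y, y \in SLset d m -> injective (fun z : 'M['Z_n]_d => red n y *m z).
  by move=> y yG z1 z2 /(congr1 (mulmx (invmx (red n y)))); rewrite !mulKmx ?unitred.
have hA : forall y z, y \in SLset d m -> ((red n y *m z) \in SLset d n) = (z \in SLset d n).
  by move=> y z yG; rewrite !inE det_mulmx detred // mul1r.
have hch := hexp m hm hcop.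
pose A z := [set y | (y \in SLset d m) && f (red n y *m z) y].
pose Z := [set z in SLset d n | (#|SLset d m| < #|A z| * 2)%N].
pose c g (i j : bool) z := #|[set y | (y \in SLset d m) &&
   ((f (red n y *m z) y == i) &&
    (f (red n (redZ m g *m y) *m z) (redZ m g *m y) == j))]|.
pose Mz z := [set y | (y \in SLset d m) && (f (red n y *m z) y != (z \in Z))].
exists Z; split; first by apply/subsetP => z; rewrite inE => /andP[].
have E1 := count_swap _ _ (SLset d n) (SLset d m) (fun y z => red n y *m z) (fun x y => f x y != fZ Z x y) hinj hA.
rewrite /= in E1.
have E1' : #|[set p : 'M['Z_n]_d * 'M['Z_m]_d |
        [&& p.1 \in SLset d n, p.2 \in SLset d m &
            f p.1 p.2 != fZ Z p.1 p.2]]| = (\sum_(z in SLset d n) #|Mz z|)%N.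
  rewrite E1; apply: eq_bigr => z _; apply: eq_card => y; rewrite !inE.
  case yG: (\det y == 1) => //=.
  have yG' : y \in SLset d m by rewrite inE yG.
  rewrite /fZ mulKmx; first by rewrite /Z !inE.
  exact: unitred.
have EC : forall g, g \in S -> forall i j : bool,
    #|[set p : 'M['Z_n]_d * 'M['Z_m]_d |
        [&& p.1 \in SLset d n, p.2 \in SLset d m, f p.1 p.2 == i &
            f (redZ n g *m p.1) (redZ m g *m p.2) == j]]|
    = (\sum_(z in SLset d n) c g i j z)%N.
  move=> g gS i j.
  have E := count_swap _ _ (SLset d n) (SLset d m) (fun y z => red n y *m z)
     (fun x y => (f x y == i) && (f (redZ n g *m x) (redZ m g *m y) == j)) hinj hA.
  rewrite /= in E; rewrite E; apply: eq_bigr => z _; apply: eq_card => y; rewrite !inE.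
  by rewrite redM redZE mulmxA.
have hz : forall z, z \in SLset d n ->
    eps * (#|Mz z|)%:R <= ((\sum_(g <- undup S) (c g true false z + c g false true z))%N)%:R.
  move=> z zG.
  have MzG : Mz z \subset SLset d m by apply/subsetP => y; rewrite inE => /andP[].
  have M2 : (#|Mz z| * 2 <= #|SLset d m|)%N.
    have hs := card_split _ (SLset d m) (fun y => f (red n y *m z) y).
    case zZ: (z \in Z).
    - have hM : Mz z = [set y | (y \in SLset d m) && ~~ f (red n y *m z) y].
        by apply/setP => y; rewrite /Mz zZ !inE; case: (f _ _); rewrite ?andbT ?andbF.
      move: zZ; rewrite inE zG /= -/(A z) => hZ.
      have hZ' : (#|SLset d m| < #|A z| * 2)%N by rewrite hZ.
      have aux : forall a b G : nat, (a + b)%N = G -> (G < a * 2)%N -> (b * 2 <= G)%N.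
        by move=> a b G; lia.
      rewrite hM; exact: aux hs hZ'.
    - have hM : Mz z = A z.
        by apply/setP => y; rewrite /Mz zZ !inE; case: (f _ _); rewrite ?andbT ?andbF.
      move: zZ; rewrite inE zG /= => /negbT; rewrite -leqNgt hM; lia.
  apply: le_trans (cheeg _ _ _ _ _ _ _ hch MzG M2) _; rewrite ler_nat.
  apply: leq_trans (bnd_le _ _ S (Mz z)) _.
  rewrite big_seq [X in (_ <= X)%N]big_seq; apply: leq_sum => g; rewrite mem_undup => gS.
  have -> : #|[set y in Mz z | redZ m g *m y \notin Mz z]| = c g (~~ (z \in Z)) (z \in Z) z.
    apply: eq_card => y; rewrite /Mz /c; move: (z \in Z) => b; rewrite !inE.
    case yG: (\det y == 1) => //=.
    have -> : \det (redZ m g *m y) == 1 by rewrite det_mulmx detZ // mul1r (eqP yG).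
    by case: b; case: (f _ _); case: (f _ _).
  by case: (z \in Z) => /=; [rewrite leq_addl | rewrite leq_addr].
pose N := (#|SLset d n| * #|SLset d m|)%N.
have Npos : (0 < N)%N.
  have h1 : forall k, (1%:M : 'M['Z_k]_d) \in SLset d k by move=> k; rewrite inE det1.
  by rewrite muln_gt0; apply/andP; split; apply/card_gt0P; eexists; apply: h1.
have NposR : (0 : R) < N%:R by rewrite ltr0n.
have hC : forall g, g \in S -> forall i : bool,
   ((\sum_(z in SLset d n) c g i (~~ i) z)%N)%:R < eps / (32 * (size (undup S))%:R) * N%:R.
  move=> g gS i; have := hf g gS i (~~ i).
  rewrite /u /vf; case: i => /=; rewrite sub0r normrN ger0_norm ?divr_ge0 ?ler0n //;
  rewrite -/N ltr_pdivrMr // EC //.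
have key : eps * (#|[set p : 'M['Z_n]_d * 'M['Z_m]_d |
        [&& p.1 \in SLset d n, p.2 \in SLset d m &
            f p.1 p.2 != fZ Z p.1 p.2]]|)%:R <=
   \sum_(g <- undup S) (((\sum_(z in SLset d n) c g true false z)%N)%:R
                       + ((\sum_(z in SLset d n) c g false true z)%N)%:R).
  rewrite E1' natr_sum mulr_sumr.
  apply: le_trans (ler_sum _ (fun z zG => hz z zG)) _.
  rewrite -natr_sum exchange_big /= natr_sum; apply: ler_sum => g _.
  by rewrite big_split /= natrD.
rewrite -/N.
case: (eqVneq (undup S) [::]) => [Sn|Sn].
  move: key; rewrite Sn big_nil => key.
  have : (#|[set p : 'M['Z_n]_d * 'M['Z_m]_d |
        [&& p.1 \in SLset d n, p.2 \in SLset d m &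
            f p.1 p.2 != fZ Z p.1 p.2]]|)%:R <= (0 : R).
    by rewrite -(pmulr_rle0 _ heps).
  move=> h0; apply: le_lt_trans h0 _; apply: mulr_gt0 => //.
  by rewrite divr_gt0 ?ltr01 ?ltr0n.
have sz : (0 < size (undup S))%N by rewrite lt0n size_eq0.
have szR : (0 : R) < (size (undup S))%:R by rewrite ltr0n.
have lt2 : \sum_(g <- undup S) (((\sum_(z in SLset d n) c g true false z)%N)%:R
                       + ((\sum_(z in SLset d n) c g false true z)%N)%:R)
     < (size (undup S))%:R * (2 * (eps / (32 * (size (undup S))%:R) * N%:R)).
  apply: sum_lt_const => // g; rewrite mem_undup => gS.
  by rewrite mulr2n mulrDl mul1r; apply: ltrD; [apply: (hC g gS true) | apply: (hC g gS false)].
have eq : (size (undup S))%:R * (2 * (eps / (32 * (size (undup S))%:R) * N%:R))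
     = eps * (1 / 16 * N%:R) :> R.
  by field; rewrite lt0r_neq0.
rewrite eq in lt2.
have := lt_le_trans (le_lt_trans key lt2) (lexx _).
by rewrite ltr_pM2l.
Qed.
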